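(* Let $H$ be a graph. Neither a leaf nor a support vertex of $H$ belongs to a good subgraph of $H$.
   Context: Graphs are finite and may have multiple edges and loops. A leaf is a vertex of degree one; a support vertex is a vertex adjacent to a leaf. Good subgraph: Let $Q$ be a subgraph of $H$ without isolated vertices, and $E_Q^-$ the set of edges of $H$ not in $Q$ incident with at least one vertex of $Q$. $Q$ is a good subgraph of $H$ if there exist a set of edges $E$ with $E_Q^-\subseteq E\subseteq E_H\setminus E_Q$ and an orientation $A_E$ of the edges of $E$ (where $d^+(x)$, $d^-(x)$ denote the numbers of arcs of $A_E$ leaving, resp. entering $x$, and $d_H(x)$ is the degree in $H$) such that the arcs of $A_E$ form a family $\mathcal P=\{P_x: x\in V_Q\}$ of oriented paths indexed by the vertices of $Q$ with: (i) every vertex $v$ of $Q$ is the initial vertex of exactly one path of $\mathcal P$, and $d^+(v)=1$, $d^-(v)=d_H(v)-d_Q(v)-1$; (ii) if $x$ is an inner vertex of a path of $\mathcal P$, then $d^+(x)=1$ and $d^-(x)=d_H(x)-1$; (iii) if $x$ is an end vertex of a path of $\mathcal P$, then $d^-(x)<d_H(x)$. *)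

(* Defs.v *)
From mathcomp Require Import all_boot.
Set Implicit Arguments. Unset Strict Implicit. Unset Printing Implicit Defensive.

Section Graph.
(* A multigraph H: finite vertex type V, finite edge type E, and each edge
   e has endpoints (ends e).1, (ends e).2 (equal for a loop). *)
Variables (V E : finType) (ends : E -> V * V).

Definition incident (e : E) (x : V) : bool := ((ends e).1 == x) || ((ends e).2 == x).

(* degree in the subgraph with edge set F (loops count twice) *)
Definition degIn (F : {set E}) (x : V) : nat :=
  #|[set e in F | (ends e).1 == x]| + #|[set e in F | (ends e).2 == x]|.

Definition deg (x : V) : nat := degIn [set: E] x.

Definition leaf (x : V) : bool := deg x == 1.

Definition support_vertex (x : V) : Prop :=
  exists (e : E) (y : V), leaf y /\ y != x /\ (ends e = (x, y) \/ ends e = (y, x)).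

(* A subgraph Q without isolated vertices is determined by its edge set EQ;
   its vertex set is the set of vertices incident with an edge of EQ. *)
Definition VQ (EQ : {set E}) : {set V} := [set v | [exists e in EQ, incident e v]].

Definition EQminus (EQ : {set E}) : {set E} :=
  [set e | (e \notin EQ) && [exists v in VQ EQ, incident e v]].

(* orientation: dir e = true means arc (ends e).1 -> (ends e).2 *)
Definition tail (dir : E -> bool) (e : E) : V := if dir e then (ends e).1 else (ends e).2.
Definition head (dir : E -> bool) (e : E) : V := if dir e then (ends e).2 else (ends e).1.

Definition outdeg (A : {set E}) (dir : E -> bool) (x : V) : nat :=
  #|[set e in A | tail dir e == x]|.
Definition indeg (A : {set E}) (dir : E -> bool) (x : V) : nat :=
  #|[set e in A | head dir e == x]|.

(* p (a sequence of arcs) is an oriented path starting at x: its vertex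
   sequence x :: map head p has pairwise distinct vertices and consecutive
   arcs are joined head to tail. *)
Definition oriented_path_from (dir : E -> bool) (x : V) (p : seq E) : bool :=
  (map (tail dir) p == belast x (map (head dir) p)) && uniq (x :: map (head dir) p).

Definition inner_vertex (dir : E -> bool) (x : V) (p : seq E) (v : V) : bool :=
  v \in behead (map (tail dir) p).

Definition end_vertex (dir : E -> bool) (x : V) (p : seq E) (v : V) : bool :=
  (v == x) || (v == last x (map (head dir) p)).

Definition good_subgraph (EQ : {set E}) : Prop :=
  exists (A : {set E}) (dir : E -> bool) (P : V -> seq E),
    [/\ EQminus EQ \subset A,
        A \subset ~: EQ,
        (forall x, x \in VQ EQ -> oriented_path_from dir x (P x)),
        (* the arcs of A_E are exactly the arcs of the paths, each used once *)
        (forall e, \sum_(x in VQ EQ) count_mem e (P x) = nat_of_bool (e \in A))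
      & [/\
        (forall v, v \in VQ EQ ->
           outdeg A dir v = 1 /\ indeg A dir v + degIn EQ v + 1 = deg v),
        (forall x v, x \in VQ EQ -> inner_vertex dir x (P x) v ->
           outdeg A dir v = 1 /\ indeg A dir v + 1 = deg v)
      &
        (forall x v, x \in VQ EQ -> end_vertex dir x (P x) v ->
           indeg A dir v < deg v)]].

End Graph.

(* Main.v *)
Require Import Defs.
From mathcomp Require Import all_boot.

Lemma degIn_pos (V E : finType) (ends : E -> V * V) (EQ : {set E}) v :
  v \in VQ ends EQ -> 0 < degIn ends EQ v.
Proof.
rewrite inE => /existsP [e /andP [eEQ]]; rewrite /incident /degIn => /orP [] /eqP h.
- have : e \in [set e in EQ | (ends e).1 == v] by rewrite inE eEQ h eqxx.
  by move=> H; rewrite addn_gt0 ; apply/orP; left; apply/card_gt0P; exists e.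
- have : e \in [set e in EQ | (ends e).2 == v] by rewrite inE eEQ h eqxx.
  by move=> H; rewrite addn_gt0 ; apply/orP; right; apply/card_gt0P; exists e.
Qed.

Lemma inner_aux (T : eqType) (x y : T) (s : seq T) :
  y \in s -> y != last x s -> y \in behead (belast x s).
Proof.
case: s => //= a s'.
by rewrite lastI mem_rcons in_cons => /orP [/eqP -> | //]; rewrite eqxx.
Qed.

Theorem mainTheorem6 (V E : finType) (ends : E -> V * V) (EQ : {set E}) :
  good_subgraph ends EQ ->
  forall v : V, v \in VQ ends EQ -> ~~ leaf ends v /\ ~ support_vertex ends v.
Proof.
move=> [A [dir [P [sub1 sub2 Hpath Hsum [Hi Hii Hiii]]]]].
have leafP : forall v, v \in VQ ends EQ -> ~~ leaf ends v.
  move=> v vQ; have [_ H] := Hi v vQ; have := @degIn_pos V E ends EQ v vQ.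
  by rewrite /leaf -H; case: (degIn ends EQ v) => // n _; by rewrite addn1 addnS.
move=> v vQ; split; first exact: leafP.
move=> [e [y [ly [yv he]]]].
have yQ : y \notin VQ ends EQ by apply/negP => /leafP; rewrite ly.
have ev : incident ends e v by rewrite /incident; case: he => -> /=; rewrite eqxx ?orbT.
have ey : incident ends e y by rewrite /incident; case: he => -> /=; rewrite eqxx ?orbT.
have eQ : e \notin EQ.
  apply/negP => eQ; move/negP: yQ; apply; rewrite inE; apply/existsP; exists e.
  by rewrite eQ.
have eA : e \in A.
  apply: (subsetP sub1); rewrite inE eQ /=; apply/existsP; exists v; by rewrite vQ.
have [x xQ eP] : exists2 x, x \in VQ ends EQ & e \in P x.
  have := Hsum e; rewrite eA => H.
  case: (boolP [exists z in VQ ends EQ, e \in P z]) => [/exists_inP // | /exists_inPn Hn].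
  move: H; rewrite big1 // => z zQ; apply/eqP; rewrite -leqn0 leqNgt -has_count.
  by rewrite has_pred1; apply: Hn.
have inA : forall f, f \in P x -> f \in A.
  move=> f fP; have := Hsum f; rewrite (bigD1 x) //=.
  case: (f \in A) => // /eqP; rewrite addn_eq0 => /andP [/eqP H _].
  by move: fP; rewrite -has_pred1 has_count H.
have /andP [/eqP Htail _] := Hpath x xQ.
set s := map (Defs.head ends dir) (P x) in Htail.
have yx : y != x by apply: contraNneq yQ => ->.
have ys : y \in s.
  have : y \in x :: s.
    have hy : y = Defs.tail ends dir e \/ y = Defs.head ends dir e.
      rewrite /Defs.tail /Defs.head; case: (dir e); case: he => ->; auto.
    case: hy => ->.
    - rewrite lastI mem_rcons in_cons -Htail; apply/orP; right.
      by apply/mapP; exists e.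
    - by rewrite in_cons; apply/orP; right; apply/mapP; exists e.
  by rewrite in_cons (negbTE yx).
have indpos : 0 < indeg ends A dir y.
  move/mapP: ys => [f fP hf]; rewrite /indeg; apply/card_gt0P; exists f.
  by rewrite inE inA // hf eqxx.
have dy : deg ends y = 1 by apply/eqP.
case: (eqVneq y (last x s)) => hl.
- have := Hiii x y xQ; rewrite /end_vertex -/s hl eqxx orbT -hl dy => H.
  by move: (H isT); rewrite ltnS leqn0 => /eqP H0; rewrite H0 in indpos.
- have iv : inner_vertex ends dir x (P x) y.
    rewrite /inner_vertex Htail -/s.
    exact: inner_aux.
  have [_ H] := Hii x y xQ iv; move: H; rewrite dy addn1 => -[H0].
  by rewrite H0 in indpos.
Qed.
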